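(* Let $X$ be a super $X$-set parameter and let $G$ be a graph. If an $X$-set $S$ of $G$ is a cut-vertex of $\mathfrak{X}(G)$, then $S=V(G)$.
   Context: All graphs are finite, simple, undirected, with nonempty vertex set. A super $X$-set parameter $X$ assigns to each graph $G$ a family of subsets of $V(G)$, called the $X$-sets of $G$, such that: every graph isomorphism maps $X$-sets to $X$-sets; every graph has at least one $X$-set; and (Superset) if $S$ is an $X$-set of $G$ and $S\subseteq S'\subseteq V(G)$, then $S'$ is an $X$-set of $G$. The $X$-TAR graph $\mathfrak{X}(G)$ has as vertices the $X$-sets of $G$, with $S_1S_2$ an edge iff $|S_1\ominus S_2|=1$ ($\ominus$ = symmetric difference). *)

(* Defs.v *)
From mathcomp Require Import all_boot.
Set Implicit Arguments. Unset Strict Implicit. Unset Printing Implicit Defensive.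

Definition simple_graph (T : finType) (e : rel T) : Prop :=
  [/\ irreflexive e, symmetric e & 0 < #|T|].

(* A graph parameter: to each graph (T, e) it assigns the family of its X-sets,
   given by a boolean predicate on {set T}. *)
Definition graph_param := forall T : finType, rel T -> {set T} -> bool.

Definition super_param (X : graph_param) : Prop :=
  (forall (T1 T2 : finType) (e1 : rel T1) (e2 : rel T2) (f : T1 -> T2),
      simple_graph e1 -> simple_graph e2 -> bijective f ->
      (forall x y, e2 (f x) (f y) = e1 x y) ->
      forall S : {set T1}, X T1 e1 S = X T2 e2 (f @: S))
  /\
  (forall (T : finType) (e : rel T), simple_graph e -> exists S, X T e S)
  /\
  (forall (T : finType) (e : rel T), simple_graph e ->
      forall S S' : {set T}, X T e S -> S \subset S' -> X T e S').

(* The X-TAR graph of (T,e): vertex set = X-sets, adjacency = symmetric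
   difference of size one. *)
Definition tar_vertices (X : graph_param) (T : finType) (e : rel T) : {set {set T}} :=
  [set S | X T e S].

Definition tar_adj (T : finType) : rel {set T} :=
  fun S1 S2 => #|(S1 :\: S2) :|: (S2 :\: S1)| == 1.

Definition induced_rel (U : finType) (r : rel U) (W : {set U}) : rel U :=
  fun x y => [&& x \in W, y \in W & r x y].

Definition ncomp (U : finType) (r : rel U) (W : {set U}) : nat :=
  n_comp (induced_rel r W) (mem W).

Definition cut_vertex (U : finType) (r : rel U) (W : {set U}) (v : U) : Prop :=
  v \in W /\ ncomp r W < ncomp r (W :\ v).

(* Main.v *)
Require Import Defs.
From mathcomp Require Import all_boot.

Lemma induced_sym (U : finType) (r : rel U) (W : {set U}) :
  symmetric r -> symmetric (induced_rel r W).
Proof. by move=> sr x y; rewrite /induced_rel sr andbCA. Qed.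

Lemma induced_closed (U : finType) (r : rel U) (W : {set U}) :
  symmetric r -> closed (induced_rel r W) (mem W).
Proof.
move=> sr; apply: intro_closed; first exact/sym_connect_sym/induced_sym.
by move=> x y /and3P[].
Qed.

Lemma ncomp_le (U : finType) (r : rel U) (W : {set U}) (s : U) :
  symmetric r ->
  (forall x y, x \in W :\ s -> y \in W :\ s ->
     connect (induced_rel r W) x y -> connect (induced_rel r (W :\ s)) x y) ->
  ncomp r (W :\ s) <= ncomp r W.
Proof.
move=> sr key.
set r1 := induced_rel r W; set r2 := induced_rel r (W :\ s).
have cs1 : connect_sym r1 by exact/sym_connect_sym/induced_sym.
have cs2 : connect_sym r2 by exact/sym_connect_sym/induced_sym.
rewrite /ncomp /n_comp_mem.
set A := predI _ _; set B := predI _ _.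
have -> : #|A| = #|[set root r1 z | z in A]|.
  apply/esym/card_in_imset => z1 z2 /andP[/eqP rz1 Wz1] /andP[/eqP rz2 Wz2] /= eqr.
  have c1 : connect r1 z1 z2 by apply/(rootP cs1).
  have c2 := key _ _ Wz1 Wz2 c1.
  by rewrite -rz1 -rz2; apply/(rootP cs2).
apply: subset_leq_card; apply/subsetP => w /imsetP[z /andP[_ Wz] ->].
apply/andP; split; first exact: roots_root.
have Wz' : z \in W by case/setD1P: Wz.
by rewrite /= -(closed_connect (@induced_closed _ r W sr) (connect_root _ z)).
Qed.

Lemma tar_adj_sym (T : finType) : symmetric (@tar_adj T).
Proof. by move=> A B; rewrite /tar_adj setUC. Qed.

Lemma symdiffU (T : finType) (A B C : {set T}) :
  ((A :|: C) :\: (B :|: C)) :|: ((B :|: C) :\: (A :|: C)) \subset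
  (A :\: B) :|: (B :\: A).
Proof.
apply/subsetP => x; rewrite !inE.
by case: (x \in A); case: (x \in B); case: (x \in C).
Qed.

Lemma adj_or_eq (T : finType) (A B : {set T}) :
  #|(A :\: B) :|: (B :\: A)| <= 1 -> A = B \/ tar_adj A B.
Proof.
rewrite leq_eqVlt ltnS leqn0 => /orP[h|]; first by right.
rewrite cards_eq0 setU_eq0 !setD_eq0 => /andP[h1 h2]; left.
by apply/eqP; rewrite eqEsubset h1 h2.
Qed.

Theorem proposition2p43 (X : graph_param) (T : finType) (e : rel T)
    (S : {set T}) :
  super_param X -> simple_graph e -> X T e S ->
  cut_vertex (@tar_adj T) (tar_vertices X e) S ->
  S = [set: T].
Proof.
move=> [iso [ex sup]] sg XS [SW lt].
apply/setP => v; rewrite inE; apply/negPn/negP => vS.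
set W := tar_vertices X e in SW lt.
set r1 := induced_rel (@tar_adj T) W.
set r2 := induced_rel (@tar_adj T) (W :\ S).
have cs2 : connect_sym r2 by exact/sym_connect_sym/induced_sym/tar_adj_sym.
have inWS : forall Z, (Z \in W :\ S) = (Z != S) && X T e Z.
  by move=> Z; rewrite !inE.
set Sv := v |: S.
have SvW : Sv \in W :\ S.
  rewrite inWS; apply/andP; split.
    by apply/eqP => h; move: vS; rewrite -h setU11.
  by apply: (sup _ _ sg S) => //; apply: subsetUr.
have nbr : forall N, N \in W :\ S -> tar_adj N S -> connect r2 N Sv.
  move=> N NW adj; set M := v |: N.
  have MW : M \in W :\ S.
    rewrite inWS; apply/andP; split.
      by apply/eqP => h; move: vS; rewrite -h setU11.
    move: NW; rewrite inWS => /andP[_ XN].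
    by apply: (sup _ _ sg N) => //; apply: subsetUr.
  apply: (connect_trans (y := M)).
    case vN: (v \in N).
      by have -> : M = N by rewrite /M; apply/setUidPr; rewrite sub1set.
    apply: connect1; rewrite /r2 /induced_rel NW MW /= /tar_adj.
    have -> : (N :\: M) :|: (M :\: N) = [set v].
      apply/setP => x; rewrite !inE.
      case: (eqVneq x v) => [->|xv]; rewrite ?vN ?(negbTE xv) //=.
      by case: (x \in N).
    by rewrite cards1.
  have h : #|(M :\: Sv) :|: (Sv :\: M)| <= 1.
    rewrite /M /Sv !(setUC [set v]).
    apply: (leq_trans (subset_leq_card (@symdiffU _ N S [set v]))).
    by move: adj; rewrite /tar_adj => /eqP ->.
  case: (adj_or_eq _ _ _ h) => [->|a]; first exact: connect0.
  by apply: connect1; rewrite /r2 /induced_rel MW SvW.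
have key : forall x y, x \in W :\ S -> y \in W :\ S ->
    connect r1 x y -> connect r2 x y.
  move=> x y xW yW c.
  set D := [pred z | connect r2 x z || ((z == S) && connect r2 x Sv)].
  have clD : closed r1 D.
    apply: intro_closed; first exact/sym_connect_sym/induced_sym/tar_adj_sym.
    move=> z w /and3P[zW wW zw]; rewrite !inE => /orP[cz|/andP[/eqP zS cS]].
      have zWS : z \in W :\ S.
        by rewrite -(closed_connect (@induced_closed _ _ (W :\ S) (@tar_adj_sym T)) cz).
      case: (w =P S) => [wS|/eqP wS].
        subst w; apply/orP; right.
        exact: connect_trans cz (nbr _ zWS zw).
      apply/orP; left; apply: connect_trans cz (connect1 _).
        by rewrite /r2 /induced_rel zWS zw andbT; apply/setD1P.
    subst z.
    have wWS : w \in W :\ S.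
      apply/setD1P; split => //; apply/eqP => wS; move: zw; rewrite wS /tar_adj.
      by rewrite setDv setU0 cards0.
    apply/orP; left; apply: connect_trans cS _.
    by rewrite cs2; apply: nbr => //; rewrite tar_adj_sym.
  have := closed_connect clD c; rewrite !inE connect0 /= => /esym.
  by case/orP => // /andP[/eqP yS _]; move: yW; rewrite yS setD11.
have := @ncomp_le _ _ _ _ (@tar_adj_sym T) key.
by rewrite leqNgt lt.
Qed.
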